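(* Let $k\ge1$ and $m\ge0$ be integers. The sum of the ending heights over all $k$-Dyck prefixes with exactly $m$ up-steps whose last step is an up-step (equivalently, the total number of down-steps needed to return to the $x$-axis, summed over these prefixes) equals $$\frac1{1+(m+1)(k+1)}\binom{1+(m+1)(k+1)}{m+1}-\frac1{1+m(k+1)}\binom{1+m(k+1)}{m}.$$
   Context: A $k$-Dyck prefix is a lattice path starting at $(0,0)$ with up-steps $(1,k)$ and down-steps $(1,-1)$ that never goes below the $x$-axis; the height of a point is its $y$-coordinate. *)

(* Defs.v *)
From mathcomp Require Import all_boot all_order all_algebra.
Set Implicit Arguments. Unset Strict Implicit. Unset Printing Implicit Defensive.
Import Order.TTheory GRing.Theory Num.Theory.
Local Open Scope ring_scope.

(* A lattice path is a sequence of steps: [true] = up-step (1,k),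
   [false] = down-step (1,-1). *)
Definition step_val (k : nat) (b : bool) : int := if b then k%:Z else (-1)%R.

Definition height (k : nat) (p : seq bool) : int := \sum_(b <- p) step_val k b.

Definition is_kDyck_prefix (k : nat) (p : seq bool) : Prop :=
  forall i : nat, (i <= size p)%N -> 0 <= height k (take i p).

Definition num_up (p : seq bool) : nat := count id p.

Definition kDyck_last_up (k m : nat) (p : seq bool) : Prop :=
  [/\ is_kDyck_prefix k p, num_up p = m, p != [::] & last false p = true].

(* Main.v *)
Require Import Defs.
From mathcomp Require Import all_boot all_order all_algebra.
From mathcomp Require Import zify.
Import Order.TTheory GRing.Theory Num.Theory.
Local Open Scope ring_scope.

Lemma height_nil k : height k [::] = 0.
Proof. by rewrite /height big_nil. Qed.
Lemma height_cons k b p : height k (b :: p) = step_val k b + height k p.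
Proof. by rewrite /height big_cons. Qed.
Lemma height_cat k a b : height k (a ++ b) = height k a + height k b.
Proof. by rewrite /height big_cat. Qed.
Lemma height_rcons k a b : height k (rcons a b) = height k a + step_val k b.
Proof. by rewrite -cats1 height_cat height_cons height_nil addr0. Qed.
Lemma height_nseqf k j : height k (nseq j false) = - (j%:Z).
Proof.
elim: j => [|j IH]; first by rewrite height_nil.
rewrite /= height_cons IH /step_val /=; lia.
Qed.
Lemma height_formula k p :
  height k p = (k * count id p)%N%:Z - (size p - count id p)%N%:Z.
Proof.
elim: p => [|b p IH]; first by rewrite height_nil muln0.
rewrite height_cons IH /step_val; have := count_size id p; case: b => /= ?; lia.
Qed.
Lemma perm_rot' (T : eqType) r (p : seq T) : perm_eq (rot r p) p.
Proof. by rewrite perm_rot. Qed.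
Lemma height_rot k r p : height k (rot r p) = height k p.
Proof. by rewrite /height (perm_big _ (perm_rot' _ r p)). Qed.

Definition prefb k (p : seq bool) :=
  all (fun i => 0 <= height k (take i p)) (iota 0 (size p).+1).

Lemma prefbP k p : reflect (is_kDyck_prefix k p) (prefb k p).
Proof.
apply: (iffP allP) => H.
- move=> i hi; apply: H; rewrite mem_iota; lia.
- move=> i; rewrite mem_iota => hi; apply: H; lia.
Qed.

Lemma prefb_nil k : prefb k [::].
Proof. by rewrite /prefb /= height_nil. Qed.

Lemma prefb_rcons k a b :
  prefb k (rcons a b) = prefb k a && (0 <= height k (rcons a b)).
Proof.
rewrite /prefb size_rcons -(addn1 (size a).+1) iotaD all_cat add0n.
congr andb; last by rewrite /= andbT take_oversize // size_rcons.
apply: eq_in_all => i; rewrite mem_iota => hi.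
rewrite -cats1 take_cat; case: ifP => // /negbT; rewrite -leqNgt => h2.
have -> : i = size a by lia.
by rewrite subnn take0 cats0 take_size.
Qed.

Lemma prefb_catl k a b : prefb k (a ++ b) -> prefb k a.
Proof.
elim/last_ind: b => [|b x IH]; first by rewrite cats0.
by rewrite -rcons_cat prefb_rcons => /andP [] /IH.
Qed.

Lemma nseqSr (j : nat) (x : bool) : nseq j.+1 x = rcons (nseq j x) x.
Proof. by elim: j => //= j ->. Qed.

Lemma prefb_height k p : prefb k p -> 0 <= height k p.
Proof.
move/allP => /(_ (size p)); rewrite take_size; apply; rewrite mem_iota; lia.
Qed.

Lemma prefb_nseq k a j :
  prefb k (a ++ nseq j false) = prefb k a && (j%:Z <= height k a).
Proof.
elim: j => [|j IH].
  rewrite cats0; case H: (prefb k a) => //=; apply/esym.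
  exact: prefb_height H.
rewrite nseqSr -rcons_cat prefb_rcons IH height_rcons height_cat height_nseqf /step_val.
case: (prefb k a) => //=.
apply/andP/idP => [[? ?]|?]; [lia | split; lia].
Qed.

Lemma consI (b : bool) : injective (cons b).
Proof. by move=> x y []. Qed.

Fixpoint W (n : nat) : seq (seq bool) :=
  if n is n'.+1 then [::] :: (map (cons true) (W n') ++ map (cons false) (W n'))
  else [:: [::]].

Lemma mem_W n w : (w \in W n) = (size w <= n)%N.
Proof.
elim: n w => [|n IH] [|b w] //=.
rewrite in_cons /= mem_cat.
have h1 : forall c, (c :: w \in map (cons c) (W n)) = (size w <= n)%N.
  by move=> c; rewrite mem_map ?IH //; apply: consI.
have h2 : forall c, c != b -> (b :: w \in map (cons c) (W n)) = false.
  by move=> c hc; apply/mapP => -[x _ [e _]]; move: hc; rewrite e eqxx.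
by case: b h2 => h2; rewrite h1 h2 ?orbF.
Qed.

Lemma uniq_W n : uniq (W n).
Proof.
elim: n => [|n IH] //=.
rewrite mem_cat negb_or cat_uniq.
have u : forall c, uniq (map (cons c) (W n)) by move=> c; rewrite map_inj_uniq //; apply: consI.
rewrite !u /= andbT; apply/andP; split; first (by apply/andP; split; apply/mapP => -[]).
by apply/hasPn => x /mapP [y _ ->]; apply/mapP => -[z _ []].
Qed.

Fixpoint wnm (n m : nat) : seq (seq bool) :=
  if n is n'.+1 then
    (if m is m'.+1 then map (cons true) (wnm n' m') else [::]) ++ map (cons false) (wnm n' m)
  else if m is 0 then [:: [::]] else [::].

Lemma size_wnm n m : size (wnm n m) = 'C(n, m).
Proof.
elim: n m => [|n IH] [|m] //=; rewrite ?size_cat !size_map !IH //; first by rewrite !bin0.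
by rewrite binS addnC.
Qed.

Lemma nil_notin_map (c : bool) s : ([::] \in map (cons c) s) = false.
Proof. by apply/negbTE/mapP => -[]. Qed.

Lemma mem_wnm n m w : (w \in wnm n m) = (size w == n) && (count id w == m).
Proof.
elim: n m w => [|n IH] m [|b w] //=.
- by case: m.
- by case: m.
- by case: m => [|m]; rewrite mem_cat !nil_notin_map.
rewrite mem_cat eqSS.
have h2 : forall c s, c != b -> (b :: w \in map (cons c) s) = false.
  by move=> c s hc; apply/mapP => -[x _ [e _]]; move: hc; rewrite e eqxx.
case: b h2 => h2.
- rewrite h2 // orbF; case: m => [|m] /=.
  + by rewrite in_nil add1n andbF.
  + by rewrite (mem_map (@consI true)) IH add1n eqSS.
- have -> : (false :: w \in match m with 0 => [::] | m'.+1 => map (cons true) (wnm n m') end) = false.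
    by case: m => [|m] //; rewrite h2.
  by rewrite (mem_map (@consI false)) IH add0n.
Qed.

Lemma uniq_wnm n m : uniq (wnm n m).
Proof.
elim: n m => [|n IH] [|m] //=; rewrite ?cat_uniq ?map_inj_uniq ?IH //; try exact: consI.
by rewrite andbT; apply/hasPn => x /mapP [y _ ->]; apply/mapP => -[z _ []].
Qed.

Lemma take_catl_le (T : Type) j (x y : seq T) : (j <= size x)%N -> take j (x ++ y) = take j x.
Proof.
move=> h; rewrite take_cat; case: ifP => // /negbT; rewrite -leqNgt => h2.
have -> : j = size x by lia.
by rewrite subnn take0 cats0 take_size.
Qed.

Definition goodb k (w : seq bool) :=
  (height k w == -1) && all (fun i => 0 <= height k (take i w)) (iota 0 (size w)).

Lemma goodb_rcons k p b :
  goodb k (rcons p b) = (height k (rcons p b) == -1) && prefb k p.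
Proof.
rewrite /goodb /prefb size_rcons; congr andb.
apply: eq_in_all => i; rewrite mem_iota => hi.
by rewrite -cats1 take_catl_le //; lia.
Qed.

Section Cycle.
Variables (k : nat) (w : seq bool).
Hypothesis hw : height k w = -1.
Let n := size w.
Let s i := height k (take i w).

Lemma rot_take1 r j : (r <= n)%N -> (j <= n - r)%N ->
  height k (take j (rot r w)) = s (r + j)%N - s r.
Proof.
move=> hr hj; rewrite /rot take_catl_le ?size_drop //.
by rewrite /s takeD height_cat addrC addKr.
Qed.

Lemma rot_take2 r t : (r <= n)%N -> (t <= r)%N ->
  height k (take (n - r + t) (rot r w)) = -1 - s r + s t.
Proof.
move=> hr ht; rewrite /rot take_cat size_drop ltnNge leq_addr /=.
rewrite addKn take_takel // (height_cat k (drop r w) (take t w)) /s -hw.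
have e : height k w = height k (take r w) + height k (drop r w).
  by rewrite -height_cat cat_take_drop.
rewrite e; lia.
Qed.

Lemma good_rot_iff r : (r < n)%N ->
  goodb k (rot r w) <-> (forall i, (i < n)%N -> s r <= s i) /\ (forall i, (i < r)%N -> s r < s i).
Proof.
move=> hr; rewrite /goodb height_rot hw eqxx /= size_rot -/n.
split.
- move/allP => H; split => i hi.
  + case: (leqP r i) => hri.
    * have := H (i - r)%N; rewrite mem_iota rot_take1; [|lia|lia].
      have -> : (r + (i - r) = i)%N by lia.
      move=> h; have := h ltac:(lia); lia.
    * have := H (n - r + i)%N; rewrite mem_iota rot_take2; [|lia|lia].
      move=> h; have := h ltac:(lia); lia.
  + have := H (n - r + i)%N; rewrite mem_iota rot_take2; [|lia|lia].
    move=> h; have := h ltac:(lia); lia.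
- move=> [H1 H2]; apply/allP => j; rewrite mem_iota => hj.
  case: (ltnP j (n - r)) => hjr.
  + rewrite rot_take1; [|lia|lia]. have := H1 (r + j)%N ltac:(lia); lia.
  + have -> : j = (n - r + (j - (n - r)))%N by lia.
    rewrite rot_take2; [|lia|lia]. have := H2 (j - (n - r))%N ltac:(lia); lia.
Qed.

Lemma exists_min (N : nat) : exists r, (r < N.+1)%N /\
  (forall i, (i < N.+1)%N -> s r <= s i) /\ (forall i, (i < r)%N -> s r < s i).
Proof.
elim: N => [|N [r [hr [H1 H2]]]].
  exists 0%N; split => //; split => // i; rewrite ltnS leqn0 => /eqP -> //.
case: (ltP (s N.+1) (s r)) => h.
- exists N.+1; split => //; split => i hi.
  + case: (ltnP i N.+1) => hi2; last by have -> : i = N.+1 by lia.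
    have := H1 i hi2; lia.
  + have := H1 i hi; lia.
- exists r; split; first lia; split => // i hi.
  case: (ltnP i N.+1) => hi2; first exact: H1.
  by have -> : i = N.+1 by lia.
Qed.

Lemma cycle_lemma : (0 < n)%N ->
  count (fun r => goodb k (rot r w)) (iota 0 n) = 1%N.
Proof.
move=> hn.
have [r0 [hr0 [H1 H2]]] : exists r, (r < n)%N /\
  (forall i, (i < n)%N -> s r <= s i) /\ (forall i, (i < r)%N -> s r < s i).
  by move: hn; case: n (exists_min) => // N _ /(_ N).
rewrite (@eq_in_count _ _ (pred1 r0)); last first.
  move=> r; rewrite mem_iota add0n /= => hr.
  apply/idP/eqP => [/(good_rot_iff _ hr) [G1 G2] | ->]; last exact/(good_rot_iff _ hr0).
  case: (ltngtP r r0) => // h.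
  + have := H2 r h; have := G1 r0 hr0; lia.
  + have := G2 r0 h; have := H1 r hr; lia.
by rewrite count_uniq_mem ?iota_uniq // mem_iota add0n hr0.
Qed.
End Cycle.

Lemma count_rot' (T : eqType) (a : pred T) r (x : seq T) : count a (rot r x) = count a x.
Proof. by apply/permP; rewrite perm_rot. Qed.
Lemma count_rotr' (T : eqType) (a : pred T) r (x : seq T) : count a (rotr r x) = count a x.
Proof. by apply/permP; rewrite perm_rotr. Qed.

Lemma perm_map_rot n m r : perm_eq (map (rot r) (wnm n m)) (wnm n m).
Proof.
apply: uniq_perm; rewrite ?uniq_wnm ?map_inj_uniq ?uniq_wnm //; first exact: rot_inj.
move=> x; apply/mapP/idP => [[y hy ->]|hx].
- by move: hy; rewrite !mem_wnm size_rot count_rot'.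
- exists (rotr r x); last by rewrite rotrK.
  by move: hx; rewrite !mem_wnm size_rotr count_rotr'.
Qed.

Lemma height_wnm k m w : w \in wnm (1 + m * k.+1) m -> height k w = -1.
Proof.
rewrite mem_wnm => /andP [/eqP hs /eqP hc].
rewrite height_formula hs hc mulnSr; lia.
Qed.

Lemma count_good k m :
  ((1 + m * k.+1) * count (goodb k) (wnm (1 + m * k.+1) m) = 'C(1 + m * k.+1, m))%N.
Proof.
set n := (1 + m * k.+1)%N; set Ws := wnm n m.
rewrite -size_wnm -/Ws.
transitivity (\sum_(w <- Ws) \sum_(r <- iota 0 n | goodb k (rot r w)) 1)%N; last first.
  rewrite -(count_predT Ws) -sum1_count; apply: eq_big_seq => w hw.
  rewrite sum1_count.
  have hs : size w = n by move: hw; rewrite mem_wnm => /andP [/eqP].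
  rewrite -hs cycle_lemma // ?hs //; exact: height_wnm hw.
rewrite (exchange_big_dep predT) //.
under eq_bigr => r _ do rewrite (eq_bigl (fun w => goodb k (rot r w))) // sum1_count -(count_map (rot r) (goodb k)) (permP (perm_map_rot n m r)).
by rewrite big_const_seq count_predT size_iota iter_addn_0 mulnC.
Qed.

Lemma size_bij (T U : eqType) (A : seq T) (B : seq U) (f : T -> U) :
  uniq A -> uniq B -> {in A, forall x, f x \in B} -> {in A &, injective f} ->
  {in B, forall y, exists2 x, x \in A & y = f x} -> size A = size B.
Proof.
move=> uA uB fAB finj fsurj; rewrite -(size_map f); apply: perm_size.
apply: uniq_perm => //; first by rewrite map_inj_in_uniq.
move=> y; apply/mapP/idP => [[x hx ->]|hy]; first exact: fAB.
by have [x hx ->] := fsurj y hy; exists x.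
Qed.

Lemma split_last_inj (a a' : seq bool) t t' :
  a ++ true :: nseq t false = a' ++ true :: nseq t' false -> a = a' /\ t = t'.
Proof.
move=> /(congr1 rev); rewrite !rev_cat !rev_cons -!cats1 -!catA /=.
have rn : forall j, rev (nseq j false) = nseq j false.
  by move=> j; elim: j => //= j IH; rewrite rev_cons IH -nseqSr.
rewrite !rn.
elim: t t' => [|t IH] [|t'] //=.
- by move=> [] /(congr1 rev); rewrite !revK.
- by move=> [] /IH [-> ->].
Qed.

Lemma split_last (g : seq bool) : (0 < count id g)%N ->
  exists a t, g = a ++ true :: nseq t false.
Proof.
elim/last_ind: g => [|g b IH] //.
rewrite -cats1 count_cat /= addn0; case: b => /= h.
- by exists g, 0%N.
- have [a [t ->]] := IH ltac:(lia).
  by exists a, t.+1; rewrite -catA /= cats1 -nseqSr.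
Qed.

Definition hn k p := `|height k p|%N.

Lemma hnE k p : prefb k p -> (hn k p)%:Z = height k p.
Proof. by move=> /prefb_height h; rewrite /hn gez0_abs. Qed.

Lemma prefb_size k p : prefb k p -> (size p <= count id p * k.+1)%N.
Proof.
move=> /prefb_height; rewrite height_formula mulnS => h.
have := count_size id p; lia.
Qed.

Definition Tl k m := filter (fun p => prefb k p && (count id p == m)) (W (m * k.+1)).
Definition Ll k m :=
  filter (fun p => [&& prefb k p, count id p == m, p != [::] & last false p]) (W (m * k.+1)).

Lemma mem_Tl k m p : (p \in Tl k m) = prefb k p && (count id p == m).
Proof.
rewrite mem_filter mem_W; case H: (prefb k p) => //=; case: eqP => //= <-.
exact: prefb_size.
Qed.

Lemma mem_Ll k m p :
  (p \in Ll k m) = [&& prefb k p, count id p == m, p != [::] & last false p].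
Proof.
rewrite mem_filter mem_W; case H: (prefb k p) => //=; case: eqP => //= <-.
by rewrite (prefb_size _ _ H) andbT.
Qed.

Lemma uniq_Tl k m : uniq (Tl k m).
Proof. exact/filter_uniq/uniq_W. Qed.
Lemma uniq_Ll k m : uniq (Ll k m).
Proof. exact/filter_uniq/uniq_W. Qed.

Arguments prefb_height {k p}.
Arguments hnE {k p}.
Arguments prefb_size {k p}.

Lemma f_rcons (a : seq bool) t :
  a ++ true :: nseq t.+1 false = rcons (rcons a true ++ nseq t false) false.
Proof. by rewrite cat_rcons nseqSr rcons_cat. Qed.

Lemma count_f (a : seq bool) t : count id (a ++ true :: nseq t false) = (count id a).+1.
Proof.
rewrite count_cat /= add1n addnS; congr S.
suff -> : count id (nseq t false) = 0%N by rewrite addn0.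
by elim: t.
Qed.

Lemma bij1 k m : size (Tl k m) = count (goodb k) (wnm (1 + m.+1 * k.+1) m.+1).
Proof.
rewrite -size_filter.
apply: (@size_bij _ _ _ _ (fun a => a ++ true :: nseq (hn k a + k.+1) false)).
- exact: uniq_Tl.
- exact/filter_uniq/uniq_wnm.
- move=> a; rewrite mem_Tl => /andP [hp /eqP hc].
  rewrite mem_filter mem_wnm count_f hc eqxx andbT addnS f_rcons goodb_rcons.
  rewrite prefb_nseq prefb_rcons hp height_rcons height_cat height_nseqf height_rcons.
  have hh0 := hnE hp; have hh := hh0; have hs := prefb_size hp; have hcs := count_size id a.
  rewrite height_formula hc in hh; rewrite hc in hs hcs.
  rewrite size_rcons size_cat size_rcons size_nseq /step_val /=.
  rewrite mulSn mulnS in hs *; rewrite mulnC in hh.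
  apply/andP; split; [apply/and3P; split; [apply/eqP| |] | apply/eqP]; lia.
- by move=> a b _ _ /split_last_inj [].
- move=> y; rewrite mem_filter mem_wnm => /andP [hg /andP [_ /eqP hc]].
  have [a [t ey]] := split_last y ltac:(lia).
  move: hg hc; rewrite ey count_f => hg [hc].
  case: t ey hg => [|t] ey.
    rewrite cats1 goodb_rcons height_rcons => /andP [/eqP h1 /prefb_height h2].
    move: h1; rewrite /step_val; lia.
  rewrite f_rcons goodb_rcons prefb_nseq prefb_rcons height_rcons height_cat height_nseqf height_rcons.
  move=> /andP [/eqP h1 /andP [/andP [hp _] _]].
  exists a; first by rewrite mem_Tl hp hc eqxx.
  have hh := hnE hp.
  rewrite -f_rcons; suff -> : t.+1 = (hn k a + k.+1)%N by [].
  move: h1; rewrite /step_val; lia.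
Qed.

Lemma bij3 k m : size (Tl k m) = size (Ll k m.+1).
Proof.
apply: (@size_bij _ _ _ _ (fun a => rcons a true)).
- exact: uniq_Tl.
- exact: uniq_Ll.
- move=> a; rewrite mem_Tl mem_Ll => /andP [hp /eqP hc].
  rewrite prefb_rcons hp height_rcons -cats1 count_cat hc /= addn1 eqxx.
  have := prefb_height hp; rewrite /step_val last_cat /= andbT.
  case: a {hp hc} => //= [|x a] h; apply/andP; split => //; lia.
- by move=> a b _ _ /rcons_inj [].
- move=> y; rewrite mem_Ll => /and4P [hp /eqP hc hne hl].
  case/lastP: y hp hc hne hl => // a b; rewrite last_rcons => hp hc _ hl.
  move: hl hp hc => -> ; rewrite prefb_rcons -cats1 count_cat /= addn1 => /andP [hp _] [hc].
  by exists a; rewrite ?mem_Tl ?hp ?hc ?eqxx ?cats1.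
Qed.

Lemma bij2 k m :
  size (Tl k m.+1) = sumn [seq (hn k q).+1 | q <- Ll k m.+1].
Proof.
have -> : [seq (hn k q).+1 | q <- Ll k m.+1] =
          [seq size (iota 0 (hn k q).+1) | q <- Ll k m.+1].
  by apply: eq_map => q; rewrite size_iota.
rewrite -(size_allpairs_dep (fun q j => q ++ nseq j false)).
apply/esym/perm_size/uniq_perm; last first.
- move=> p; rewrite mem_Tl; apply/allpairsPdep/idP.
  + move=> [q [j [hq hj ->]]]; move: hq hj; rewrite mem_Ll mem_iota add0n.
    move=> /and4P [hp /eqP hc hne hl] hj.
    rewrite prefb_nseq hp count_cat hc.
    suff -> : count id (nseq j false) = 0%N by rewrite addn0 eqxx andbT; have := hnE hp; lia.
    by elim: j {hj}.
  + move=> /andP [hp /eqP hc].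
    have [a [t ep]] := split_last p ltac:(lia).
    exists (rcons a true), t; move: hp hc; rewrite ep -cat_rcons prefb_nseq.
    move=> /andP [hq ht] hc; split => //.
    * rewrite count_cat in hc; rewrite mem_Ll hq last_rcons andbT.
      have e : count id (nseq t false) = 0%N by elim: (t).
      rewrite e addn0 in hc; rewrite hc eqxx /=; by case: (a).
    * rewrite mem_iota add0n ltnS; have := hnE hq; lia.
- exact: uniq_Tl.
- apply: allpairs_uniq_dep; first exact: uniq_Ll.
  + by move=> q _; apply: iota_uniq.
  + move=> [q1 j1] [q2 j2] /allpairsPdep [q1' [j1' [hq1 _ e1]]] /allpairsPdep [q2' [j2' [hq2 _ e2]]] /=.
    case: e1 => -> ->; case: e2 => -> ->.
    move: hq1 hq2; rewrite !mem_Ll => /and4P [_ _ hne1 hl1] /and4P [_ _ hne2 hl2].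
    case/lastP: q1' hne1 hl1 => // a1 b1 _; rewrite last_rcons => ->.
    case/lastP: q2' hne2 hl2 => // a2 b2 _; rewrite last_rcons => ->.
    by rewrite !cat_rcons => /split_last_inj [-> ->].
Qed.

Definition G k j := count (goodb k) (wnm (1 + j * k.+1) j).

Lemma sumn_S (T : Type) (f : T -> nat) (l : seq T) :
  sumn [seq (f x).+1 | x <- l] = (\sum_(x <- l) f x + size l)%N.
Proof. by elim: l => [|x l IH] /=; rewrite ?big_nil ?big_cons // IH; lia. Qed.

Lemma sum_hn k m : (\sum_(q <- Ll k m) hn k q + G k m = G k m.+1)%N.
Proof.
case: m => [|m].
- have -> : Ll k 0 = [::] by rewrite /Ll /= prefb_nil.
  rewrite big_nil add0n /G -bij1.
  have := count_good k 0; rewrite /= bin0 mul1n => ->.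
  by rewrite /Tl /= prefb_nil.
- rewrite /G -!bij1 bij3 bij2 sumn_S; lia.
Qed.

Lemma sum_Posz (T : Type) (f : T -> nat) (l : seq T) :
  \sum_(x <- l) (f x)%:Z = (\sum_(x <- l) f x)%N%:Z.
Proof. by elim: l => [|x l IH]; rewrite ?big_nil ?big_cons // IH PoszD. Qed.

Lemma G_rat k j :
  ((G k j)%:R : rat) = ((1 + j * k.+1)%N%:R)^-1 * ('C(1 + j * k.+1, j))%:R.
Proof.
have nz : ((1 + j * k.+1)%N%:R : rat) != 0 by rewrite pnatr_eq0.
by rewrite -(count_good k j) natrM mulKf.
Qed.

Theorem mainTheorem4 (k m : nat) (hk : (1 <= k)%N) :
  exists s : seq (seq bool),
    [/\ uniq s,
        (forall p, p \in s <-> kDyck_last_up k m p) &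
        ((\sum_(p <- s) height k p)%:~R : rat) =
          ((1 + (m.+1) * (k.+1))%N%:R)^-1 * ('C(1 + (m.+1) * (k.+1), m.+1))%:R
        - ((1 + m * (k.+1))%N%:R)^-1 * ('C(1 + m * (k.+1), m))%:R].
Proof.
exists (Ll k m); split.
- exact: uniq_Ll.
- move=> p; rewrite mem_Ll /kDyck_last_up /num_up; split.
  + by move=> /and4P [/prefbP h1 /eqP h2 h3 h4].
  + by move=> [/prefbP h1 h2 h3 h4]; rewrite h1 h2 h3 h4 eqxx.
- rewrite -!G_rat -(sum_hn k m) natrD addrK.
  rewrite big_seq (eq_bigr (fun q => (hn k q)%:Z)); last first.
    by move=> q; rewrite mem_Ll => /and4P [hp _ _ _]; rewrite (hnE hp).
  by rewrite -big_seq sum_Posz.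
Qed.
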